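(* Let $M=\mathrm{Mon}\langle \Sigma \mid R\rangle$ be a finitely presented monoid and let $\mathfrak{R}$ be a rewriting system for $M$ that is complete and cyclically complete. Let $u,v\in\Sigma^*$. (i) If $u$ and $v$ are transposed, then $\rho(u)\simeq\rho(v)$. (ii) If $\rho(u)\simeq\rho(v)$, then $u\equiv_M v$.
   Context: $\Sigma^*$ is the free monoid on the alphabet $\Sigma$; $=_M$ is equality in $M$. A rewriting system $\mathfrak{R}$ is a set of rules $l\to r$ with $l,r\in\Sigma^*$; $plq\to prq$ is one rewriting step. $\mathfrak{R}$ is complete for $M$ if it is terminating, confluent, and the congruence it generates on $\Sigma^*$ is $=_M$. $u\simeq v$ means $u=ab$, $v=ba$ for some words $a,b$ (cyclic conjugates in $\Sigma^*$). $u\rightsquigarrow v$ means some cyclic conjugate $\tilde u$ of $u$ (possibly $u$) satisfies $\tilde u\to v$; $\rightsquigarrow^*$ is its reflexive–transitive closure. $\mathfrak{R}$ is cyclically terminating if there is no infinite sequence $u_1\rightsquigarrow u_2\rightsquigarrow\cdots$; cyclically confluent if whenever $w\rightsquigarrow^* u$ and $w\rightsquigarrow^* v$ there exist $z\simeq z'$ with $u\rightsquigarrow^* z$ and $v\rightsquigarrow^* z'$; cyclically complete if both. A word is cyclically irreducible if it and all its cyclic conjugates are irreducible modulo $\mathfrak{R}$. $\rho(u)$ denotes the cyclically irreducible form of $u$, i.e. a cyclically irreducible word $w$ with $u\rightsquigarrow^* w$ (unique up to $\simeq$ when $\mathfrak{R}$ is cyclically complete). Words $u,v$ are transposed if there exist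 $x,y\in\Sigma^*$ with $u=_M xy$ and $v=_M yx$. $u\equiv_M v$ means there exist $x,y\in\Sigma^*$ with $ux=_M xv$ and $yu=_M vy$. *)

(* Defs.v *)
From mathcomp Require Import all_boot.
From Stdlib Require Import Relations.Relation_Operators.
Set Implicit Arguments. Unset Strict Implicit. Unset Printing Implicit Defensive.

Section Rewriting.
Variable Sigma : finType.
Definition word := seq Sigma.

Definition rules := word -> word -> Prop.

Definition step (RS : rules) (x y : word) : Prop :=
  exists p q l r, RS l r /\ x = p ++ l ++ q /\ y = p ++ r ++ q.

Definition reach (RS : rules) := clos_refl_trans word (step RS).

Definition congr (RS : rules) := clos_refl_sym_trans word (step RS).

(* equality in M = Mon<Sigma | R>, R a finite list of relations *)
Definition eqM (R : seq (word * word)) : word -> word -> Prop :=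
  congr (fun l r => (l, r) \in R).

Definition terminating (RS : rules) : Prop :=
  ~ exists f : nat -> word, forall n, step RS (f n) (f n.+1).

Definition confluent (RS : rules) : Prop :=
  forall w u v, reach RS w u -> reach RS w v ->
    exists z, reach RS u z /\ reach RS v z.

Definition complete_for (R : seq (word * word)) (RS : rules) : Prop :=
  [/\ terminating RS, confluent RS & forall x y, congr RS x y <-> eqM R x y].

Definition cconj (u v : word) : Prop := exists a b, u = a ++ b /\ v = b ++ a.

Definition cstep (RS : rules) (u v : word) : Prop :=
  exists u', cconj u u' /\ step RS u' v.

Definition creach (RS : rules) := clos_refl_trans word (cstep RS).

Definition cyc_terminating (RS : rules) : Prop :=
  ~ exists f : nat -> word, forall n, cstep RS (f n) (f n.+1).

Definition cyc_confluent (RS : rules) : Prop :=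
  forall w u v, creach RS w u -> creach RS w v ->
    exists z z', [/\ cconj z z', creach RS u z & creach RS v z'].

Definition cyc_complete (RS : rules) : Prop :=
  cyc_terminating RS /\ cyc_confluent RS.

Definition irreducible (RS : rules) (w : word) : Prop := ~ exists v, step RS w v.

Definition cyc_irreducible (RS : rules) (w : word) : Prop :=
  forall w', cconj w w' -> irreducible RS w'.

(* w is a cyclically irreducible form rho(u) of u *)
Definition is_rho (RS : rules) (u w : word) : Prop :=
  creach RS u w /\ cyc_irreducible RS w.

Definition transposed (R : seq (word * word)) (u v : word) : Prop :=
  exists x y, eqM R u (x ++ y) /\ eqM R v (y ++ x).

Definition equivM (R : seq (word * word)) (u v : word) : Prop :=
  exists x y, eqM R (u ++ x) (x ++ v) /\ eqM R (y ++ u) (v ++ y).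

End Rewriting.

(* Main.v *)
Require Import Defs.
From mathcomp Require Import all_boot.
From Stdlib Require Import Relations.Relation_Operators Relations.Operators_Properties Classical.
Set Implicit Arguments. Unset Strict Implicit. Unset Printing Implicit Defensive.

Section S.
Variable Sigma : finType.
Implicit Types (u v w a b c : word Sigma) (RS : rules Sigma).

Lemma cconj_rot u v : cconj u v <-> exists n, v = rot n u.
Proof.
split.
- move=> [a [b [-> ->]]]; exists (size a); by rewrite rot_size_cat.
- move=> [n ->]; exists (take n u), (drop n u); split; first by rewrite cat_take_drop.
  by rewrite /rot.
Qed.

Lemma cconj_refl u : cconj u u.
Proof. by apply/cconj_rot; exists 0; rewrite rot0. Qed.

Lemma cconj_sym u v : cconj u v -> cconj v u.
Proof. by move=> [a [b [-> ->]]]; exists b, a. Qed.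

Lemma cconj_trans u v w : cconj u v -> cconj v w -> cconj u w.
Proof.
move=> /cconj_rot [n ->] /cconj_rot [m ->]; apply/cconj_rot.
by exists (rot_add u n m); rewrite rot_rot_add.
Qed.

Lemma cyc_irr_conj RS a b : cyc_irreducible RS a -> cconj a b -> cyc_irreducible RS b.
Proof. move=> H ab w bw; apply: H; exact: cconj_trans ab bw. Qed.

Lemma creach_irr RS a w : cyc_irreducible RS a -> creach RS a w -> w = a.
Proof.
move=> H /clos_rt_rt1n_iff h; case: h => // y z [u' [au' st]] _.
by exfalso; apply: (H u' au'); exists y.
Qed.

Lemma reach_creach RS a b : reach RS a b -> creach RS a b.
Proof.
elim=> [x y s|x|x y z _ h1 _ h2].
- by apply: rt_step; exists x; split => //; exact: cconj_refl.
- exact: rt_refl.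
- exact: rt_trans h1 h2.
Qed.

Lemma rho_forward RS w r a : cyc_confluent RS -> is_rho RS w r -> creach RS w a ->
  exists r', is_rho RS a r' /\ cconj r r'.
Proof.
move=> cc [wr ir] wa; have [z [z' [zz rz az]]] := cc _ _ _ wr wa.
have ezr := creach_irr ir rz; subst z.
exists z'; split => //; split => //; exact: cyc_irr_conj ir zz.
Qed.

Lemma rho_backward RS w r a : is_rho RS a r -> creach RS w a -> is_rho RS w r.
Proof. by move=> [ar ir] wa; split => //; exact: rt_trans wa ar. Qed.

Lemma rho_unique RS w r1 r2 : cyc_confluent RS -> is_rho RS w r1 -> is_rho RS w r2 ->
  cconj r1 r2.
Proof.
move=> cc h1 [w2 i2]; have [r' [h' c']] := rho_forward cc h1 w2.
case: h' => r2r' _; by rewrite (creach_irr i2 r2r') in c'.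
Qed.

Lemma rho_conj RS a b ra : cyc_confluent RS -> cconj a b -> is_rho RS a ra ->
  exists rb, is_rho RS b rb /\ cconj ra rb.
Proof.
move=> cc ab [ar ir].
case: (classic (cyc_irreducible RS b)) => hb.
- have ia : cyc_irreducible RS a.
    by apply: (cyc_irr_conj hb); exact: cconj_sym.
  rewrite (creach_irr ia ar); exists b; split => //; split => //; exact: rt_refl.
- have [b' [bb' [c st]]] : exists b', cconj b b' /\ exists c, step RS b' c.
    apply: NNPP => hn; apply: hb => b' bb' [c st]; apply: hn; exists b'; split => //; by exists c.
  have ac : creach RS a c by apply: rt_step; exists b'; split => //; exact: cconj_trans ab bb'.
  have bc : creach RS b c by apply: rt_step; exists b'.
  have [rc [hc crc]] := rho_forward cc (conj ar ir) ac.
  exists rc; split => //; exact: rho_backward hc bc.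
Qed.

Lemma church_rosser RS x y : confluent RS -> congr RS x y ->
  exists z, reach RS x z /\ reach RS y z.
Proof.
move=> cf; elim=> [a b s|a|a b _ [z [h1 h2]]|a b c _ [z1 [h1 h2]] _ [z2 [h3 h4]]].
- exists b; split; [exact: rt_step|exact: rt_refl].
- exists a; split; exact: rt_refl.
- by exists z.
- have [z [k1 k2]] := cf _ _ _ h2 h3.
  exists z; split; [exact: rt_trans h1 k1|exact: rt_trans h4 k2].
Qed.

Lemma congr_ctx RS p q a b : congr RS a b -> congr RS (p ++ a ++ q) (p ++ b ++ q).
Proof.
elim=> [x y [p' [q' [l [r [h [-> ->]]]]]]|x|x y _ h|x y z _ h1 _ h2].
- apply: rst_step; exists (p ++ p'), (q' ++ q), l, r; split => //; by rewrite !catA.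
- exact: rst_refl.
- exact: rst_sym.
- exact: rst_trans h1 h2.
Qed.

Lemma equivM_refl R u : equivM R u u.
Proof. by exists [::], [::]; rewrite cats0; split; apply: rst_refl. Qed.

Lemma equivM_sym R u v : equivM R u v -> equivM R v u.
Proof. by move=> [x [y [h1 h2]]]; exists y, x; split; apply: rst_sym. Qed.

Lemma congr_r RS q a b : congr RS a b -> congr RS (a ++ q) (b ++ q).
Proof. exact: (congr_ctx [::] q). Qed.

Lemma congr_l RS p a b : congr RS a b -> congr RS (p ++ a) (p ++ b).
Proof. by move=> h; have := congr_ctx p [::] h; rewrite !cats0. Qed.

Lemma equivM_trans R u v w : equivM R u v -> equivM R v w -> equivM R u w.
Proof.
move=> [x [y [h1 h2]]] [x' [y' [h3 h4]]]; exists (x ++ x'), (y' ++ y); split.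
- apply: rst_trans (_ : eqM R _ ((x ++ v) ++ x')) _.
  + rewrite catA; exact: congr_r.
  + rewrite -!catA; exact: congr_l.
- apply: rst_trans (_ : eqM R _ (y' ++ (v ++ y))) _.
  + rewrite -catA; exact: congr_l.
  + rewrite !catA; exact: congr_r.
Qed.

Lemma equivM_eq R u v : eqM R u v -> equivM R u v.
Proof.
move=> h; exists [::], [::]; rewrite !cats0 /=; split => //; exact: rst_sym.
Qed.

Lemma equivM_cconj R u v : cconj u v -> equivM R u v.
Proof.
move=> [a [b [-> ->]]]; exists a, b; split; rewrite -!catA; exact: rst_refl.
Qed.

Lemma creach_equivM R RS u v : complete_for R RS -> creach RS u v -> equivM R u v.
Proof.
move=> [_ _ ce]; elim=> [x y [u' [cu st]]|x|x y z _ h1 _ h2].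
- apply: equivM_trans (equivM_cconj R cu) _; apply: equivM_eq; apply/ce.
  exact: rst_step.
- exact: equivM_refl.
- exact: equivM_trans h1 h2.
Qed.

End S.

Theorem theorem3p3 (Sigma : finType) (R : seq (word Sigma * word Sigma))
    (RS : rules Sigma) :
  complete_for R RS -> cyc_complete RS ->
  forall u v : word Sigma,
    (transposed R u v ->
       forall ru rv, is_rho RS u ru -> is_rho RS v rv -> cconj ru rv) /\
    (forall ru rv, is_rho RS u ru -> is_rho RS v rv -> cconj ru rv ->
       equivM R u v).
Proof.
move=> hc [_ cc] u v; split.
- move=> [x [y [h1 h2]]] ru rv hu hv.
  have [_ cf ce] := hc.
  have [z1 [uz1 xz1]] := church_rosser cf (proj2 (ce _ _) h1).
  have [z2 [vz2 yz2]] := church_rosser cf (proj2 (ce _ _) h2).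
  have [r1 [hr1 c1]] := rho_forward cc hu (reach_creach uz1).
  have hxy := rho_backward hr1 (reach_creach xz1).
  have [r2 [hr2 c2]] := rho_conj cc (ex_intro _ x (ex_intro _ y (conj erefl erefl))) hxy.
  have [r3 [hr3 c3]] := rho_forward cc hr2 (reach_creach yz2).
  have hv3 := rho_backward hr3 (reach_creach vz2).
  have c4 := rho_unique cc hv3 hv.
  exact: cconj_trans (cconj_trans c1 c2) (cconj_trans c3 c4).
- move=> ru rv [ur _] [vr _] c.
  apply: equivM_trans (creach_equivM hc ur) _.
  apply: equivM_trans (equivM_cconj R c) _.
  exact: equivM_sym (creach_equivM hc vr).
Qed.
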